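(* Fix a Markov policy $\pi$, action thresholds $\{C^{\mathbf a}_h\}$ (hence a fixed pseudo-policy $\bar\pi$), and two sets of state thresholds $\{C^{\mathbf x}_h\}$, $\{(C^{\mathbf x}_h)'\}$. Let $\bar d^\pi_0=(\bar d^\pi_0)'=d_0$ and for $h\ge1$, $\bar d^\pi_h=\mathbf P^{\bar\pi}_{h-1}(\bar d^\pi_{h-1}\wedge C^{\mathbf x}_{h-1}d^D_{h-1})$, $(\bar d^\pi_h)'=\mathbf P^{\bar\pi}_{h-1}((\bar d^\pi_{h-1})'\wedge(C^{\mathbf x}_{h-1})'d^D_{h-1})$. Then for each $h\in[H]$: (1) (Monotonicity) if $C^{\mathbf x}_{h'}\le(C^{\mathbf x}_{h'})'$ for all $h'<h$ then $\bar d^\pi_h\le(\bar d^\pi_h)'$; and if $C^{\mathbf x}_{h'}\ge(C^{\mathbf x}_{h'})'$ for all $h'<h$ then $\bar d^\pi_h\ge(\bar d^\pi_h)'$. (2) $\|(\bar d^\pi_h)'-\bar d^\pi_h\|_1\le\sum_{h'<h}|(C^{\mathbf x}_{h'})'-C^{\mathbf x}_{h'}|$. (3) $\big|\|d^\pi_h-(\bar d^\pi_h)'\|_1-\|d^\pi_h-\bar d^\pi_h\|_1\big|\le\sum_{h'<h}|(C^{\mathbf x}_{h'})'-C^{\mathbf x}_{h'}|$.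
   Context: Setting: finite-horizon episodic MDP, measurable state space $\mathcal X$, finite action space $\mathcal A$, $[H]=\{0,\dots,H-1\}$, transitions $P_h$, initial distribution $d_0$; $d^\pi_h$ is the density of $x_h$ under $\pi$. Offline data: $\mathcal D_h$ consists of tuples $(x_h,a_h,x_{h+1})$ generated by an arbitrary roll-in to $x_h$, then $a_h\sim\pi^D_h(\cdot\mid x_h)$ for a Markov single-step policy $\pi^D_h$, then $x_{h+1}\sim P_h$; $d^D_h\in\Delta(\mathcal X)$ is the marginal density of $x_h$ in $\mathcal D_h$. Notation: $a\wedge b=\min(a,b)$ pointwise; $(\mathbf P^{\bar\pi}_hd)(x'):=\iint P_h(x'\mid x,a)\bar\pi_h(a\mid x)d(x)\mathrm dx\,\mathrm da$; the pseudo-policy is $\bar\pi_h:=\pi_h\wedge C^{\mathbf a}_h\pi^D_h$. *)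

(* Defs.v *)
From mathcomp Require Import all_boot all_order all_algebra.
From mathcomp Require Import all_classical all_reals all_analysis.
Set Implicit Arguments. Unset Strict Implicit. Unset Printing Implicit Defensive.
Import Order.TTheory GRing.Theory Num.Theory.
Local Open Scope classical_set_scope.
Local Open Scope ring_scope.
Local Open Scope ereal_scope.

(* Transition operator  (P^{pol} f)(x') = \int_x \sum_a P(x'|x,a) pol(a|x) f(x) mu(dx).
   Pk x a x' is the density (w.r.t. the reference measure mu) of P_h(x'|x,a). *)
Definition Pop {dX} {X : measurableType dX} {R : realType} {A : finType}
  (mu : {measure set X -> \bar R}) (Pk : X -> A -> X -> R) (pol : A -> X -> R)
  (f : X -> \bar R) : X -> \bar R :=
  fun x' => \int[mu]_x (\sum_(a : A) ((Pk x a x' * pol a x)%:E * f x)).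

Definition pibar {R : realType} {A : finType} {X : Type}
  (pi piD : nat -> A -> X -> R) (Ca : nat -> R) (h : nat) : A -> X -> R :=
  fun a x => Order.min (pi h a x) (Ca h * piD h a x)%R.

Fixpoint dbar {dX} {X : measurableType dX} {R : realType} {A : finType}
  (mu : {measure set X -> \bar R}) (P : nat -> X -> A -> X -> R)
  (pib : nat -> A -> X -> R) (d0 : X -> R) (dD : nat -> X -> R)
  (Cx : nat -> R) (h : nat) : X -> \bar R :=
  match h with
  | 0%N => fun x => (d0 x)%:E
  | h'.+1 => Pop mu (P h') (pib h')
      (fun x => Order.min (dbar mu P pib d0 dD Cx h' x) ((Cx h' * dD h' x)%R)%:E)
  end.

Fixpoint dpi {dX} {X : measurableType dX} {R : realType} {A : finType}
  (mu : {measure set X -> \bar R}) (P : nat -> X -> A -> X -> R)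
  (pi : nat -> A -> X -> R) (d0 : X -> R) (h : nat) : X -> \bar R :=
  match h with
  | 0%N => fun x => (d0 x)%:E
  | h'.+1 => Pop mu (P h') (pi h') (dpi mu P pi d0 h')
  end.

Definition L1dist {dX} {X : measurableType dX} {R : realType}
  (mu : {measure set X -> \bar R}) (f g : X -> \bar R) : \bar R :=
  \int[mu]_x `|f x - g x|.

(* Main.v *)
From HB Require Import structures.
Require Import Defs.
From mathcomp Require Import all_boot all_order all_algebra.
From mathcomp Require Import all_classical all_reals all_analysis.
From mathcomp Require Import measurable_realfun.
From mathcomp Require Import lra.
Import Order.TTheory GRing.Theory Num.Theory.
Local Open Scope classical_set_scope.
Local Open Scope ring_scope.
Local Open Scope ereal_scope.
Section E.
Context {R : realType}.
Implicit Types x y z : \bar R.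

Lemma abse_subC x y : `|x - y| = `|y - x|.
Proof.
case: x y => [x| |] [y| |] //=; by rewrite -?EFinB distrC.
Qed.

Lemma le_add_abs x y : 0 <= x -> 0 <= y -> x <= y + `|x - y|.
Proof.
case: x y => [x| |] [y| |] //= x0 y0; rewrite ?leey //.
rewrite -EFinD lee_fin.
by have := ler_norm (x - y); lra.
Qed.

Lemma fin_abs_le x y z : x \is a fin_num -> y \is a fin_num ->
  x <= y + z -> y <= x + z -> `|x - y| <= z.
Proof.
case: x y z => [x| |] [y| |] [z| |] //= _ _.
- rewrite -!EFinD !lee_fin => h1 h2.
  by rewrite ler_norml; apply/andP; split; lra.
- by move=> *; rewrite leey.
Qed.

Lemma abse_tri x y z : `|x - z| <= `|x - y| + `|y - z|.
Proof.
case: x y z => [x| |] [y| |] [z| |] //=; rewrite ?leey //.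
by rewrite -EFinD lee_fin ler_distD.
Qed.

Lemma min_abs_le x y (u v : R) : 0 <= x -> 0 <= y ->
  `|Order.min x u%:E - Order.min y v%:E| <= `|x - y| + `|u - v|%:E.
Proof.
case: x y => [x| |] [y| |] //= x0 y0; rewrite ?leey //.
rewrite -!EFin_min -EFinB -EFinD lee_fin.
have := ler_norm (x - y); have := ler_norm (y - x).
have := ler_norm (u - v); have := ler_norm (v - u).
rewrite (distrC y x) (distrC v u) !minEle.
rewrite ler_norml; case: ifP => h1; case: ifP => h2; move=> *; apply/andP; split; lra.
Qed.

End E.
Set Default Proof Using "All".
Section K.
Context {dX} {X : measurableType dX} {R : realType} {A : finType}
  {mu : {sigma_finite_measure set X -> \bar R}}.
Context {Pk : X -> A -> X -> R}.
Hypothesis mPk : forall a, measurable_fun setT (fun xy : X * X => Pk xy.1 a xy.2).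
Hypothesis Pk0 : forall x a y, (0 <= Pk x a y)%R.
Hypothesis Pk1 : forall x a, \int[mu]_y (Pk x a y)%:E = 1.
Context {pol : A -> X -> R}.
Hypothesis mpol : forall a, measurable_fun setT (pol a).
Hypothesis pol0 : forall a x, (0 <= pol a x)%R.
Hypothesis pol1 : forall x, (\sum_(a : A) pol a x <= 1)%R.

Definition Kf (f : X -> \bar R) (z : X * X) : \bar R :=
  \sum_(a : A) ((Pk z.1 a z.2 * pol a z.1)%:E * f z.1).

Lemma Kf_ge0 (f : X -> \bar R) : (forall x, 0 <= f x) -> forall z, 0 <= Kf f z.
Proof.
move=> f0 z; apply: sume_ge0 => a _; apply: mule_ge0 => //.
by rewrite lee_fin mulr_ge0.
Qed.

Lemma Kf_meas (f : X -> \bar R) : measurable_fun setT f -> measurable_fun setT (Kf f).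
Proof.
move=> mf; apply: emeasurable_sum => a.
apply: (@emeasurable_funM _ _ _ _ (fun z : X * X => (Pk z.1 a z.2 * pol a z.1)%:E) (fun z : X * X => f z.1)).
  apply/measurable_EFinP; apply: (@measurable_funM _ _ _ _ (fun z : X * X => Pk z.1 a z.2) (fun z : X * X => pol a z.1)).
    exact: mPk.
  exact: measurableT_comp (mpol a) measurable_fst.
exact: measurableT_comp mf measurable_fst.
Qed.

Lemma Pop_meas (f : X -> \bar R) : measurable_fun setT f -> (forall x, 0 <= f x) ->
  measurable_fun setT (Pop mu Pk pol f).
Proof.
move=> mf f0.
exact: (@measurable_fun_fubini_tonelli_G _ _ _ _ _ mu (Kf f) (Kf_meas _ mf) (Kf_ge0 _ f0)).
Qed.

Lemma Pop_ge0 (f : X -> \bar R) : (forall x, 0 <= f x) -> forall y, 0 <= Pop mu Pk pol f y.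
Proof. by move=> f0 y; apply: integral_ge0 => x _; exact: (Kf_ge0 _ f0 (x, y)). Qed.

Lemma Kf_meas1 (f : X -> \bar R) y : measurable_fun setT f -> measurable_fun setT (fun x => Kf f (x, y)).
Proof. move=> mf; exact: measurableT_comp (Kf_meas _ mf) (pair2_measurable y). Qed.

Lemma Kf_meas2 (f : X -> \bar R) x : measurable_fun setT f -> measurable_fun setT (fun y => Kf f (x, y)).
Proof. move=> mf; exact: measurableT_comp (Kf_meas _ mf) (pair1_measurable x). Qed.

Lemma Pop_mass (f : X -> \bar R) : measurable_fun setT f -> (forall x, 0 <= f x) ->
  \int[mu]_y Pop mu Pk pol f y <= \int[mu]_x f x.
Proof.
move=> mf f0.
have E := fubini_tonelli (Kf f) (Kf_meas _ mf) (Kf_ge0 _ f0).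
rewrite /Pop; rewrite [X in X <= _](_ : _ = \int[mu]_y \int[mu]_x Kf f (x, y)) //.
rewrite -E; apply: ge0_le_integral => //.
- by move=> x _; apply: integral_ge0 => y _; exact: (Kf_ge0 _ f0 (x, y)).
- exact: (@measurable_fun_fubini_tonelli_F _ _ _ _ _ mu (Kf f) (Kf_meas _ mf) (Kf_ge0 _ f0)).
move=> x _.
rewrite /Kf /= ge0_integral_sum //; last first.
  move=> a y _; apply: mule_ge0 => //; by rewrite lee_fin mulr_ge0.
  move=> a; apply: (@emeasurable_funM _ _ _ _ (fun y : X => (Pk x a y * pol a x)%:E) (fun _ : X => f x)) => //.
  apply/measurable_EFinP; apply: measurable_funM => //.
  exact: measurableT_comp (mPk a) (pair1_measurable x).
have -> : \sum_(a : A) \int[mu]_y ((Pk x a y * pol a x)%:E * f x) =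
          \sum_(a : A) ((pol a x)%:E * f x).
  apply: eq_bigr => a _.
  rewrite ge0_integralZr //; last first.
    by move=> y _; rewrite lee_fin mulr_ge0.
    by apply/measurable_EFinP; apply: measurable_funM => //;
       exact: measurableT_comp (mPk a) (pair1_measurable x).
  congr (_ * _).
  under eq_integral do rewrite EFinM.
  rewrite ge0_integralZr ?Pk1 ?mul1e //.
  - by apply/measurable_EFinP; exact: measurableT_comp (mPk a) (pair1_measurable x).
  - by move=> y _; rewrite lee_fin.
  - by rewrite lee_fin.
rewrite -ge0_sume_distrl; last by move=> a _; rewrite lee_fin.
rewrite sumEFin -[leRHS]mul1e; apply: lee_wpmul2r => //.
by rewrite lee_fin.
Qed.


Lemma Pop_le (f g : X -> \bar R) : measurable_fun setT f -> measurable_fun setT g ->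
  (forall x, 0 <= f x) -> (forall x, f x <= g x) ->
  forall y, Pop mu Pk pol f y <= Pop mu Pk pol g y.
Proof.
move=> mf mg f0 fg y; apply: ge0_le_integral => //.
- by move=> x _; exact: (Kf_ge0 _ f0 (x, y)).
- exact: (Kf_meas1 _ y mf).
- exact: (Kf_meas1 _ y mg).
move=> x _; apply: lee_sum => a _; apply: lee_wpmul2l => //.
by rewrite lee_fin mulr_ge0.
Qed.

Lemma Pop_add (f g : X -> \bar R) : measurable_fun setT f -> measurable_fun setT g ->
  (forall x, 0 <= f x) -> (forall x, 0 <= g x) ->
  forall y, Pop mu Pk pol (fun x => f x + g x) y = Pop mu Pk pol f y + Pop mu Pk pol g y.
Proof.
move=> mf mg f0 g0 y; rewrite /Pop -ge0_integralD //.
- apply: eq_integral => x _; rewrite -big_split /=; apply: eq_bigr => a _.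
  by rewrite ge0_muleDr.
- by move=> x _; exact: (Kf_ge0 _ f0 (x, y)).
- exact: (Kf_meas1 _ y mf).
- by move=> x _; exact: (Kf_ge0 _ g0 (x, y)).
- exact: (Kf_meas1 _ y mg).
Qed.

Lemma Pop_fin (f : X -> \bar R) : measurable_fun setT f -> (forall x, 0 <= f x) ->
  \int[mu]_x f x < +oo ->
  {ae mu, forall y, setT y -> Pop mu Pk pol f y \is a fin_num}.
Proof.
move=> mf f0 fi; apply: integrable_ae => //.
apply/integrableP; split; first exact: Pop_meas.
under eq_integral do rewrite gee0_abs ?Pop_ge0 //.
exact: le_lt_trans (Pop_mass _ mf f0) fi.
Qed.


Lemma Pop_L1 (f g : X -> \bar R) : measurable_fun setT f -> measurable_fun setT g ->
  (forall x, 0 <= f x) -> (forall x, 0 <= g x) ->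
  \int[mu]_x f x < +oo -> \int[mu]_x g x < +oo ->
  \int[mu]_y `|Pop mu Pk pol f y - Pop mu Pk pol g y| <= \int[mu]_x `|f x - g x|.
Proof.
move=> mf mg f0 g0 fi gi.
pose d := fun x => `|f x - g x|.
have md : measurable_fun setT d.
  by apply: measurableT_comp => //; exact: emeasurable_funB.
have d0 : forall x, 0 <= d x by move=> x; exact: abse_ge0.
apply: (le_trans _ (Pop_mass _ md d0)).
have m1 : measurable_fun setT (fun y => `|Pop mu Pk pol f y - Pop mu Pk pol g y|).
  apply: measurableT_comp => //.
  exact: (emeasurable_funB (Pop_meas _ mf f0) (Pop_meas _ mg g0)).
apply: (ae_ge0_le_integral measurableT (fun y _ => abse_ge0 _) m1
  (fun y _ => Pop_ge0 _ d0 y) (Pop_meas _ md d0)).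
have Hf := Pop_fin _ mf f0 fi; have Hg := Pop_fin _ mg g0 gi.
apply: filterS2 Hf Hg => y Hfy Hgy _.
apply: fin_abs_le; [exact: Hfy|exact: Hgy| |].
- rewrite -Pop_add //; apply: Pop_le => //.
  + exact: emeasurable_funD mg md.
  + by move=> x; exact: le_add_abs.
- rewrite -Pop_add //; apply: Pop_le => //.
  + exact: emeasurable_funD mf md.
  + by move=> x; rewrite /d abse_subC; exact: le_add_abs.
Qed.

End K.
Section Main.
Context {dX} {X : measurableType dX} {R : realType} {A : finType}
  (mu : {sigma_finite_measure set X -> \bar R}).
Variables (d0 : X -> R) (P : nat -> X -> A -> X -> R) (pi piD : nat -> A -> X -> R)
  (dD : nat -> X -> R) (Ca : nat -> R).
Hypothesis md0 : measurable_fun setT d0.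
Hypothesis d00 : forall x, (0 <= d0 x)%R.
Hypothesis d01 : \int[mu]_x (d0 x)%:E = 1.
Hypothesis mP : forall h a, measurable_fun setT (fun xy : X * X => P h xy.1 a xy.2).
Hypothesis P0 : forall h x a y, (0 <= P h x a y)%R.
Hypothesis P1 : forall h x a, \int[mu]_y (P h x a y)%:E = 1.
Hypothesis mpi : forall h a, measurable_fun setT (pi h a).
Hypothesis pi0 : forall h a x, (0 <= pi h a x)%R.
Hypothesis pi1 : forall h x, (\sum_(a : A) pi h a x)%R = 1%R.
Hypothesis mpiD : forall h a, measurable_fun setT (piD h a).
Hypothesis piD0 : forall h a x, (0 <= piD h a x)%R.
Hypothesis mdD : forall h, measurable_fun setT (dD h).
Hypothesis dD0 : forall h x, (0 <= dD h x)%R.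
Hypothesis dD1 : forall h, \int[mu]_x (dD h x)%:E = 1.
Hypothesis Ca0 : forall h, (0 <= Ca h)%R.

Let pib := pibar pi piD Ca.

Lemma mpib h a : measurable_fun setT (pib h a).
Proof.
apply: (@measurable_minr _ _ _ _ (pi h a) (fun x => Ca h * piD h a x)%R) => //.
exact: measurable_funM.
Qed.

Lemma pib0 h a x : (0 <= pib h a x)%R.
Proof. by rewrite /pib /pibar le_min pi0 mulr_ge0. Qed.

Lemma pib1 h x : (\sum_(a : A) pib h a x <= 1)%R.
Proof.
rewrite -(pi1 h x); apply: ler_sum => a _.
by rewrite /pib /pibar ge_min lexx.
Qed.

Lemma pi1' h x : (\sum_(a : A) pi h a x <= 1)%R.
Proof. by rewrite pi1. Qed.

Definition db Cx h := dbar mu P pib d0 dD Cx h.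
Definition gb Cx h x := Order.min (db Cx h x) ((Cx h * dD h x)%R)%:E.

Lemma mcd (c : R) h : measurable_fun setT (fun x => ((c * dD h x)%R)%:E).
Proof. by apply/measurable_EFinP; exact: measurable_funM. Qed.

Lemma int_cd (c : R) h : (0 <= c)%R -> \int[mu]_x ((c * dD h x)%R)%:E = c%:E.
Proof.
move=> c0; under eq_integral do rewrite EFinM.
by rewrite ge0_integralZl_EFin // ?dD1 ?mule1 //; [move=> x _; rewrite lee_fin|exact/measurable_EFinP].
Qed.

Lemma db_props Cx (Cx0 : forall h, (0 <= Cx h)%R) h :
  [/\ measurable_fun setT (db Cx h), (forall x, 0 <= db Cx h x) &
      \int[mu]_x db Cx h x < +oo].
Proof.
elim: h => [|h [mh h0 hi]].
  split; first exact/measurable_EFinP.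
    by move=> x; rewrite /db /= lee_fin.
  by rewrite /db /= d01 ltry.
have mg : measurable_fun setT (gb Cx h).
  exact: measurable_mine mh (mcd _ _).
have g0 : forall x, 0 <= gb Cx h x.
  by move=> x; rewrite /gb le_min h0 lee_fin mulr_ge0.
have gi : \int[mu]_x gb Cx h x < +oo.
  apply: (@le_lt_trans _ _ (\int[mu]_x ((Cx h * dD h x)%R)%:E)).
    apply: ge0_le_integral => //; first exact: mcd.
    by move=> x _; rewrite /gb ge_min lexx orbT.
  by rewrite int_cd // ltry.
split.
- exact: (Pop_meas (mP h) (P0 h) (P1 h) (mpib h) (pib0 h) (pib1 h) _ mg g0).
- exact: (Pop_ge0 (mP h) (P0 h) (P1 h) (mpib h) (pib0 h) (pib1 h) _ g0).
- exact: le_lt_trans (Pop_mass (mP h) (P0 h) (P1 h) (mpib h) (pib0 h) (pib1 h) _ mg g0) gi.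
Qed.

Lemma dpi_props h :
  [/\ measurable_fun setT (dpi mu P pi d0 h), (forall x, 0 <= dpi mu P pi d0 h x) &
      \int[mu]_x dpi mu P pi d0 h x < +oo].
Proof.
elim: h => [|h [mh h0 hi]].
  split; first exact/measurable_EFinP.
    by move=> x; rewrite /= lee_fin.
  by rewrite /= d01 ltry.
split.
- exact: (Pop_meas (mP h) (P0 h) (P1 h) (mpi h) (pi0 h) (pi1' h) _ mh h0).
- exact: (Pop_ge0 (mP h) (P0 h) (P1 h) (mpi h) (pi0 h) (pi1' h) _ h0).
- exact: le_lt_trans (Pop_mass (mP h) (P0 h) (P1 h) (mpi h) (pi0 h) (pi1' h) _ mh h0) hi.
Qed.

Lemma db_mono Cx Cx' (Cx0 : forall h, (0 <= Cx h)%R) (Cx'0 : forall h, (0 <= Cx' h)%R) h :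
  (forall h', (h' < h)%N -> (Cx h' <= Cx' h')%R) -> forall x, db Cx h x <= db Cx' h x.
Proof.
elim: h => [|h IH] H x; first by [].
have [mh h0 _] := db_props _ Cx0 h.
have [mh' h0' _] := db_props _ Cx'0 h.
have mg : measurable_fun setT (gb Cx h) by exact: measurable_mine mh (mcd _ _).
have mg' : measurable_fun setT (gb Cx' h) by exact: measurable_mine mh' (mcd _ _).
have g0 : forall x, 0 <= gb Cx h x.
  by move=> y; rewrite /gb le_min h0 lee_fin mulr_ge0.
apply: (Pop_le (mP h) (P0 h) (P1 h) (mpib h) (pib0 h) (pib1 h) _ _ mg mg' g0).
move=> y; rewrite /gb; apply: le_min2.
  by apply: IH => h' hh'; apply: H; rewrite ltnS ltnW.
by rewrite lee_fin ler_wpM2r // H.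
Qed.

Lemma db_L1 Cx Cx' (Cx0 : forall h, (0 <= Cx h)%R) (Cx'0 : forall h, (0 <= Cx' h)%R) h :
  \int[mu]_x `|db Cx' h x - db Cx h x| <= (\sum_(h' < h) `|Cx' h' - Cx h'|)%R%:E.
Proof.
elim: h => [|h IH].
  rewrite big_ord0 (eq_integral (fun _ => 0)) ?integral0 //.
  by move=> x _; rewrite /db /= subrr normr0.
have [mh h0 hi] := db_props _ Cx0 h.
have [mh' h0' hi'] := db_props _ Cx'0 h.
have mg : measurable_fun setT (gb Cx h) by exact: measurable_mine mh (mcd _ _).
have mg' : measurable_fun setT (gb Cx' h) by exact: measurable_mine mh' (mcd _ _).
have g0 : forall x, 0 <= gb Cx h x.
  by move=> y; rewrite /gb le_min h0 lee_fin mulr_ge0.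
have g0' : forall x, 0 <= gb Cx' h x.
  by move=> y; rewrite /gb le_min h0' lee_fin mulr_ge0.
have gle (C : nat -> R) (C0 : forall h, (0 <= C h)%R) : \int[mu]_x gb C h x < +oo.
  apply: (@le_lt_trans _ _ (\int[mu]_x ((C h * dD h x)%R)%:E)).
    have [mC C0' _] := db_props _ C0 h.
    apply: ge0_le_integral => //.
    - by move=> x _; rewrite /gb le_min lee_fin mulr_ge0 // andbT C0'.
    - exact: measurable_mine mC (mcd _ _).
    - exact: mcd.
    by move=> x _; rewrite /gb ge_min lexx orbT.
  by rewrite int_cd // ltry.
apply: le_trans.
  exact: (Pop_L1 (mP h) (P0 h) (P1 h) (mpib h) (pib0 h) (pib1 h) _ _ mg' mg g0' g0 (gle _ Cx'0) (gle _ Cx0)).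
have md : measurable_fun setT (fun x => `|db Cx' h x - db Cx h x|).
  by apply: measurableT_comp => //; exact: emeasurable_funB.
apply: (@le_trans _ _ (\int[mu]_x (`|db Cx' h x - db Cx h x| + ((`|Cx' h - Cx h| * dD h x)%R)%:E))).
  apply: ge0_le_integral => //.
  - by apply: measurableT_comp => //; exact: emeasurable_funB.
  - exact: emeasurable_funD md (mcd _ _).
  move=> x _; rewrite /gb.
  have -> : ((`|Cx' h - Cx h| * dD h x)%R = `|Cx' h * dD h x - Cx h * dD h x|)%R.
    by rewrite -mulrBl normrM (ger0_norm (dD0 h x)).
  exact: min_abs_le.
rewrite ge0_integralD //; last 2 first.
- by move=> x _; rewrite lee_fin mulr_ge0.
- exact: mcd.
rewrite int_cd // big_ord_recr /= EFinD.
exact: leeD IH (lexx _).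
Qed.
Lemma L1_tri (f g k : X -> \bar R) : measurable_fun setT f -> measurable_fun setT g ->
  measurable_fun setT k ->
  L1dist mu f g <= L1dist mu f k + L1dist mu g k.
Proof.
move=> mf mg mk; rewrite /L1dist -ge0_integralD //.
- apply: ge0_le_integral => //.
  + by apply: measurableT_comp => //; exact: emeasurable_funB.
  + apply: emeasurable_funD; apply: measurableT_comp => //; exact: emeasurable_funB.
  + by move=> x _; rewrite (abse_subC (g x)); exact: abse_tri.
- by apply: measurableT_comp => //; exact: emeasurable_funB.
- by apply: measurableT_comp => //; exact: emeasurable_funB.
Qed.

Lemma L1_fin (f g : X -> \bar R) : measurable_fun setT f -> measurable_fun setT g ->
  (forall x, 0 <= f x) -> (forall x, 0 <= g x) ->
  \int[mu]_x f x < +oo -> \int[mu]_x g x < +oo -> L1dist mu f g \is a fin_num.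
Proof.
move=> mf mg f0 g0 fi gi.
rewrite ge0_fin_numE; last by apply: integral_ge0 => x _; exact: abse_ge0.
apply: (@le_lt_trans _ _ (\int[mu]_x (f x + g x))); last first.
  by rewrite ge0_integralD //; exact: lte_add_pinfty.
apply: ge0_le_integral => //.
- by apply: measurableT_comp => //; exact: emeasurable_funB.
- exact: emeasurable_funD.
- move=> x _; apply: le_trans (lee_abs_sub _ _) _.
  by rewrite !gee0_abs.
Qed.

Lemma main_thm (Cx Cx' : nat -> R) (Cx0 : forall h, (0 <= Cx h)%R)
  (Cx'0 : forall h, (0 <= Cx' h)%R) (h : nat) :
  let db := dbar mu P (pibar pi piD Ca) d0 dD Cx h in
  let db' := dbar mu P (pibar pi piD Ca) d0 dD Cx' h in
  let S := (\sum_(h' < h) `|Cx' h' - Cx h'|)%R in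
  ((forall h', (h' < h)%N -> (Cx h' <= Cx' h')%R) -> forall x, db x <= db' x) /\
  ((forall h', (h' < h)%N -> (Cx' h' <= Cx h')%R) -> forall x, db' x <= db x) /\
  L1dist mu db' db <= S%:E /\
  `| L1dist mu (dpi mu P pi d0 h) db' - L1dist mu (dpi mu P pi d0 h) db | <= S%:E.
Proof.
move=> db1 db1' S.
split; first exact: db_mono.
split; first exact: db_mono.
have L := db_L1 _ _ Cx0 Cx'0 h.
split; first exact: L.
have [mp p0 pi_] := dpi_props h.
have [mb b0 bi] := db_props _ Cx0 h.
have [mb' b0' bi'] := db_props _ Cx'0 h.
apply: le_trans L.
apply: fin_abs_le.
- exact: L1_fin.
- exact: L1_fin.
- exact: L1_tri.
- rewrite /L1dist; under [X in _ <= _ + X]eq_integral do rewrite abse_subC.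
  exact: L1_tri.
Qed.
End Main.

Set Default Proof Using "".
Theorem proposition5 (dX : measure_display) (X : measurableType dX)
  (R : realType) (A : finType) (H : nat)
  (mu : {measure set X -> \bar R}) (mu_sf : sigma_finite setT mu)
  (d0 : X -> R) (P : nat -> X -> A -> X -> R)
  (pi piD : nat -> A -> X -> R) (dD : nat -> X -> R)
  (Ca Cx Cx' : nat -> R) :
  (* initial distribution is a density *)
  measurable_fun setT d0 -> (forall x, (0 <= d0 x)%R) ->
  \int[mu]_x (d0 x)%:E = 1 ->
  (* transition densities *)
  (forall h a, measurable_fun setT (fun xy : X * X => P h xy.1 a xy.2)) ->
  (forall h x a y, (0 <= P h x a y)%R) ->
  (forall h x a, \int[mu]_y (P h x a y)%:E = 1) ->
  (* Markov policy pi and data policy piD *)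
  (forall h a, measurable_fun setT (pi h a)) ->
  (forall h a x, (0 <= pi h a x)%R) ->
  (forall h x, (\sum_(a : A) pi h a x)%R = 1%R) ->
  (forall h a, measurable_fun setT (piD h a)) ->
  (forall h a x, (0 <= piD h a x)%R) ->
  (forall h x, (\sum_(a : A) piD h a x)%R = 1%R) ->
  (* data state marginals d^D_h are densities *)
  (forall h, measurable_fun setT (dD h)) ->
  (forall h x, (0 <= dD h x)%R) ->
  (forall h, \int[mu]_x (dD h x)%:E = 1) ->
  (* nonnegative thresholds *)
  (forall h, (0 <= Ca h)%R) -> (forall h, (0 <= Cx h)%R) -> (forall h, (0 <= Cx' h)%R) ->
  forall h : nat, (h < H)%N ->
  let db := dbar mu P (pibar pi piD Ca) d0 dD Cx h in
  let db' := dbar mu P (pibar pi piD Ca) d0 dD Cx' h in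
  let S := (\sum_(h' < h) `|Cx' h' - Cx h'|)%R in
  ((forall h', (h' < h)%N -> (Cx h' <= Cx' h')%R) -> forall x, db x <= db' x) /\
  ((forall h', (h' < h)%N -> (Cx' h' <= Cx h')%R) -> forall x, db' x <= db x) /\
  L1dist mu db' db <= S%:E /\
  `| L1dist mu (dpi mu P pi d0 h) db' - L1dist mu (dpi mu P pi d0 h) db | <= S%:E.
Proof.
case: mu mu_sf => muf cls mu_sf.
move=> md0 d00 d01 mP P0 P1 mpi pi0 pi1 mpiD piD0 piD1 mdD dD0 dD1 Ca0 Cx0 Cx'0 h _.
pose mu0 : {measure set X -> \bar R} := Measure.Pack cls.
pose mu' : {sigma_finite_measure set X -> \bar R} :=
  SigmaFiniteMeasure.Pack (SigmaFiniteMeasure.Class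
    (Measure.measure_function_Content_isMeasure_mixin cls)
    (isSFinite.Build _ _ _ muf (sfinite_measure_sigma_finite (mu:=mu0) mu_sf))
    (isSigmaFinite.Build _ _ _ muf mu_sf)).
exact (@main_thm dX X R A mu' d0 P pi piD dD Ca md0 d00 d01 mP P0 P1 mpi pi0 pi1
  mpiD piD0 mdD dD0 dD1 Ca0 Cx Cx' Cx0 Cx'0 h).
Qed.
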